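(* Let $X$ be one of the sequence spaces $\ell^p$ ($1\le p\le\infty$), $c$, or $c_0$. Let $a=(a_n)\in\ell^\infty$ with $a_n>0$ for all $n\in\mathbb{N}$, and let $b=(b_n)\in X$. Suppose there exists $k\in X^*$ such that the spectrum of $T_k:=A+bk$ satisfies $\Sigma(T_k)\subseteq H:=\{z\in\mathbb{C}\mid \operatorname{re}(z)\le 0\}$. Then: 1. $(a_n)\in c_0$, and $a_n\neq a_m$ whenever $n\neq m$; 2. $b_n\neq 0$ for all $n\in\mathbb{N}$.
   Context: Sequences are complex valued; $\ell^p$ carries the $\ell^p$-norm, $c$ (convergent sequences) and $c_0$ (null sequences) carry the sup norm. $A:X\to X$ is the diagonal operator $(x_n)\mapsto(a_nx_n)$. For $k\in X^*$, $T_k:X\to X$ is the bounded operator $x\mapsto Ax+(kx)\,b$. $\Sigma(\cdot)$ denotes the spectrum. *)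

(* Defs.v *)
From Stdlib Require Import Reals.
From Coquelicot Require Import Coquelicot.
Open Scope R_scope.

Definition cseq := nat -> C.

Inductive SeqSpace : Type :=
  | Lp (p : R)   (* l^p, to be used with 1 <= p < oo *)
  | Linf
  | Cconv
  | C0.

Definition valid_space (X : SeqSpace) : Prop :=
  match X with Lp p => 1 <= p | _ => True end.

Definition rpow (t p : R) : R :=
  if Req_EM_T t 0 then 0 else Rpower t p.

Definition bounded_seq (x : cseq) : Prop :=
  exists M : R, forall n, Cmod (x n) <= M.

Definition inX (X : SeqSpace) (x : cseq) : Prop :=
  match X with
  | Lp p => ex_series (fun n => rpow (Cmod (x n)) p)
  | Linf => bounded_seq x
  | Cconv => exists l : C, filterlim x eventually (locally l)
  | C0 => filterlim x eventually (locally (0 : C))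
  end.

Definition supnorm (x : cseq) : R :=
  real (Lub_Rbar (fun r => exists n, r = Cmod (x n))).

Definition normX (X : SeqSpace) (x : cseq) : R :=
  match X with
  | Lp p => rpow (Series (fun n => rpow (Cmod (x n)) p)) (/ p)
  | _ => supnorm x
  end.

Definition sadd (x y : cseq) : cseq := fun n => Cplus (x n) (y n).
Definition sscal (c : C) (x : cseq) : cseq := fun n => Cmult c (x n).
Definition ssub (x y : cseq) : cseq := fun n => Cminus (x n) (y n).

Definition in_dual (X : SeqSpace) (k : cseq -> C) : Prop :=
  (forall x y, inX X x -> inX X y -> k (sadd x y) = Cplus (k x) (k y)) /\
  (forall c x, inX X x -> k (sscal c x) = Cmult c (k x)) /\
  (exists M : R, forall x, inX X x -> Cmod (k x) <= M * normX X x).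

Definition bounded_op (X : SeqSpace) (T : cseq -> cseq) : Prop :=
  (forall x, inX X x -> inX X (T x)) /\
  (forall x y, inX X x -> inX X y -> T (sadd x y) = sadd (T x) (T y)) /\
  (forall c x, inX X x -> T (sscal c x) = sscal c (T x)) /\
  (exists M : R, forall x, inX X x -> normX X (T x) <= M * normX X x).

Definition in_resolvent (X : SeqSpace) (T : cseq -> cseq) (z : C) : Prop :=
  exists S : cseq -> cseq, bounded_op X S /\
    forall x, inX X x ->
      S (ssub (T x) (sscal z x)) = x /\
      ssub (T (S x)) (sscal z (S x)) = x.

Definition spectrum (X : SeqSpace) (T : cseq -> cseq) (z : C) : Prop :=
  ~ in_resolvent X T z.

Definition diagA (a : nat -> R) : cseq -> cseq :=
  fun x n => Cmult (RtoC (a n)) (x n).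

Definition Tk (a : nat -> R) (b : cseq) (k : cseq -> C) : cseq -> cseq :=
  fun x => sadd (diagA a x) (sscal (k x) b).

(* Main.v *)
Require Import Defs.
From Stdlib Require Import Reals Lra Lia Classical FunctionalExtensionality.
From Coquelicot Require Import Coquelicot.
Open Scope R_scope.

Lemma rpow_nonneg t p : 0 <= rpow t p.
Proof. unfold rpow. destruct (Req_EM_T t 0). lra. unfold Rpower. left; apply exp_pos. Qed.

Lemma rpow_0 p : rpow 0 p = 0.
Proof. unfold rpow. destruct (Req_EM_T 0 0); [reflexivity| congruence]. Qed.

Lemma rpow_pos t p : 0 < t -> rpow t p = Rpower t p.
Proof. intros. unfold rpow. destruct (Req_EM_T t 0). lra. reflexivity. Qed.

Lemma rpow_mult x y p : 0 <= x -> 0 <= y -> rpow (x*y) p = rpow x p * rpow y p.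
Proof. intros Hx Hy. destruct (Req_dec x 0). subst. rewrite Rmult_0_l, !rpow_0. ring.
destruct (Req_dec y 0). subst. rewrite Rmult_0_r, !rpow_0. ring.
rewrite !rpow_pos by (try apply Rmult_lt_0_compat; lra).
rewrite Rpower_mult_distr by lra. reflexivity. Qed.

Lemma rpow_inv t p : 0 <= t -> 0 < p -> rpow (rpow t p) (/ p) = t.
Proof. intros Ht Hp. destruct (Req_dec t 0). subst. rewrite !rpow_0; reflexivity.
rewrite (rpow_pos t) by lra. rewrite rpow_pos by (unfold Rpower; apply exp_pos).
rewrite Rpower_mult. rewrite Rinv_r by lra. apply Rpower_1. lra. Qed.

Lemma rpow_le x y p : 0 <= x <= y -> 0 <= p -> rpow x p <= rpow y p.
Proof. intros Hxy Hp. destruct (Req_dec x 0). subst. rewrite rpow_0. apply rpow_nonneg.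
rewrite !rpow_pos by lra. apply Rle_Rpower_l; lra. Qed.

Definition single (n : nat) (z : C) : cseq := fun m => if Nat.eq_dec m n then z else (RtoC 0).

Lemma is_series_single (n : nat) (r : R) :
  is_series (fun m => if Nat.eq_dec m n then r else 0) r.
Proof.
  unfold is_series. eapply filterlim_ext_loc; [|apply filterlim_const].
  exists n. intros N HN. symmetry.
  assert (Hlt : forall k, (k < n)%nat -> sum_n (fun m => if Nat.eq_dec m n then r else 0) k = 0).
  { induction k; intros Hk. rewrite sum_O. destruct (Nat.eq_dec 0 n); [lia|reflexivity].
    rewrite sum_Sn, IHk by lia. destruct (Nat.eq_dec (S k) n); [lia|]. 
    change (0 + 0 = 0). ring. }
  induction N.
  - assert (n = 0)%nat by lia. subst. rewrite sum_O. reflexivity.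
  - destruct (Nat.eq_dec (S N) n).
    + subst n. rewrite sum_Sn, Hlt by lia. destruct (Nat.eq_dec (S N) (S N)); [|congruence].
      change (0 + r = r). ring.
    + rewrite sum_Sn, IHN by lia. destruct (Nat.eq_dec (S N) n); [congruence|]. change (r + 0 = r); ring.
Qed.

Lemma lim_scal (x : nat -> C) l c : filterlim x eventually (locally l) ->
  filterlim (fun n => Cmult c (x n)) eventually (locally (Cmult c l)).
Proof. intros H. eapply filterlim_comp. exact H.
exact (@filterlim_scal_r C_AbsRing C_NormedModule c l). Qed.
Lemma lim_bnd (x : nat -> C) l : filterlim x eventually (locally l) ->
  exists M, forall n, Cmod (x n) <= M.
Proof. intros H. destruct (@filterlim_bounded C_AbsRing C_NormedModule x) as [M HM].
exists l; exact H. exists M. intros n. specialize (HM n). exact HM. Qed.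

Lemma single_lim n z : filterlim (single n z) eventually (locally (RtoC 0)).
Proof. eapply filterlim_ext_loc; [|apply (@filterlim_const nat C_UniformSpace)].
exists (S n). intros m Hm. unfold single. destruct (Nat.eq_dec m n); [lia|reflexivity]. typeclasses eauto. Qed.

Lemma rpow_single p n z : (fun m => rpow (Cmod (single n z m)) p) =
  (fun m => if Nat.eq_dec m n then rpow (Cmod z) p else 0).
Proof. apply functional_extensionality; intro m. unfold single.
destruct (Nat.eq_dec m n). reflexivity. rewrite Cmod_0, rpow_0. reflexivity. Qed.

Lemma inX_single X n z : inX X (single n z).
Proof. destruct X; simpl.
- rewrite rpow_single. eexists. apply is_series_single.
- exists (Cmod z). intro m. unfold single. destruct (Nat.eq_dec m n). lra.
  rewrite Cmod_0. apply Cmod_ge_0.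
- exists (RtoC 0). apply single_lim.
- apply single_lim.
Qed.

Lemma inX_scal X c x : inX X x -> inX X (sscal c x).
Proof. destruct X; simpl; unfold sscal.
- intros H. eapply ex_series_ext.
  2: apply (@ex_series_scal_l R_AbsRing R_NormedModule (rpow (Cmod c) p)); exact H.
  intro m. simpl. rewrite Cmod_mult, rpow_mult by apply Cmod_ge_0. reflexivity.
- intros [M HM]. exists (Cmod c * M). intro m. rewrite Cmod_mult.
  apply Rmult_le_compat_l. apply Cmod_ge_0. apply HM.
- intros [l Hl]. exists (Cmult c l). apply lim_scal; exact Hl.
- intros H. replace (RtoC 0) with (Cmult c 0) by (apply Cmult_0_r). apply lim_scal; exact H.
Qed.

Lemma sup_coord x m : bounded_seq x -> Cmod (x m) <= supnorm x.
Proof. intros [M HM]. unfold supnorm.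
destruct (Lub_Rbar_correct (fun r => exists n, r = Cmod (x n))) as [Hub Hl].
assert (Hx : Rbar_le (Cmod (x m)) (Lub_Rbar (fun r => exists n, r = Cmod (x n)))).
{ apply Hub. exists m; reflexivity. }
assert (HM' : Rbar_le (Lub_Rbar (fun r => exists n, r = Cmod (x n))) M).
{ apply Hl. intros r [n ->]. simpl. apply HM. }
destruct (Lub_Rbar (fun r => exists n, r = Cmod (x n))); simpl in *; tauto. Qed.

Lemma supnorm_single n z : supnorm (single n z) = Cmod z.
Proof. unfold supnorm. rewrite (is_lub_Rbar_unique _ (Cmod z)). reflexivity.
split.
- intros r [m ->]. unfold single. simpl. destruct (Nat.eq_dec m n). lra. rewrite Cmod_0. apply Cmod_ge_0.
- intros b Hb. apply Hb. exists n. unfold single. destruct (Nat.eq_dec n n). reflexivity. congruence.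
Qed.

Lemma normX_single X n z : valid_space X -> normX X (single n z) = Cmod z.
Proof. destruct X; simpl; intros Hv; try apply supnorm_single.
rewrite rpow_single. rewrite (is_series_unique _ _ (is_series_single n _)).
apply rpow_inv. apply Cmod_ge_0. lra. Qed.

Lemma conv_bounded x : (exists l : C, filterlim x eventually (locally l)) -> bounded_seq x.
Proof. intros [l H]. apply (lim_bnd x l H). Qed.

Lemma coord_le_norm X x m : valid_space X -> inX X x -> Cmod (x m) <= normX X x.
Proof. destruct X; simpl; intros Hv H.
- set (f := fun n => rpow (Cmod (x n)) p).
  assert (Hs : Series (fun j => if Nat.eq_dec j m then f m else 0) <= Series f).
  { apply Series_le; [|exact H]. intro j. destruct (Nat.eq_dec j m). subst; unfold f; split; [apply rpow_nonneg|lra].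
    split; [lra|apply rpow_nonneg]. }
  rewrite (is_series_unique _ _ (is_series_single m _)) in Hs.
  rewrite <- (rpow_inv (Cmod (x m)) p) by (try apply Cmod_ge_0; lra).
  apply rpow_le. split. apply rpow_nonneg. exact Hs. left; apply Rinv_0_lt_compat; lra.
- apply sup_coord; exact H.
- apply sup_coord, conv_bounded; exact H.
- apply sup_coord, conv_bounded. exists (RtoC 0); exact H.
Qed.

Lemma numeric (a : nat -> R) (l MS W : R) (y : nat -> nat -> C) (c : nat -> C) (w : nat -> C) :
  (forall n m, single n (RtoC 1) m = Cplus (y n m) (Cmult (c n) (w m))) ->
  (forall n m, Cmod (y n m) <= MS * Rabs (a n - l)) ->
  (forall m, Cmod (w m) <= W) ->
  (forall eps, 0 < eps -> forall N, exists n, (N <= n)%nat /\ Rabs (a n - l) < eps) ->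
  False.
Proof.
  intros Hrel Hy Hw Hacc.
  set (K := Rabs MS + 1).
  assert (HK : 0 < K) by (unfold K; pose proof (Rabs_pos MS); lra).
  assert (Hy' : forall n m, Cmod (y n m) <= K * Rabs (a n - l)).
  { intros n m. eapply Rle_trans. apply Hy. apply Rmult_le_compat_r. apply Rabs_pos.
    unfold K. pose proof (Rle_abs MS). lra. }
  assert (HW : 0 <= W) by (eapply Rle_trans; [apply Cmod_ge_0|apply (Hw 0%nat)]).
  assert (Hdiag : forall n, 1 <= K * Rabs (a n - l) + Cmod (c n) * Cmod (w n)).
  { intro n. specialize (Hrel n n). unfold single in Hrel. destruct (Nat.eq_dec n n); [|congruence].
    rewrite <- Cmod_mult. rewrite <- Cmod_1. rewrite Hrel. eapply Rle_trans. apply Cmod_triangle.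
    pose proof (Hy' n n). lra. }
  assert (Hoff : forall n m, n <> m -> Cmod (c n) * Cmod (w m) <= K * Rabs (a n - l)).
  { intros n m Hnm. specialize (Hrel n m). unfold single in Hrel. destruct (Nat.eq_dec m n); [congruence|].
    assert (E : Cmult (c n) (w m) = Copp (y n m)).
    { assert (E2 : Cmult (c n) (w m) = Cminus (Cplus (y n m) (Cmult (c n) (w m))) (y n m)) by ring.
      rewrite E2, <- Hrel. ring. }
    rewrite <- Cmod_mult, E, Cmod_opp. apply Hy'. }
  destruct (Hacc (/ (2 * K)) ltac:(apply Rinv_0_lt_compat; lra) 0%nat) as [i [_ Hi]].
  assert (Hi' : K * Rabs (a i - l) < 1/2).
  { apply Rmult_lt_compat_l with (r := K) in Hi; [|lra].
    replace (K * / (2 * K)) with (1/2) in Hi by (field; lra). lra. }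
  pose proof (Hdiag i) as Hdi.
  set (beta := Cmod (w i)).
  assert (Hbeta : 0 < beta).
  { destruct (Cmod_ge_0 (w i)) as [h|h]. exact h. unfold beta in *. rewrite <- h in Hdi. lra. }
  set (delta := Rmin (1/2) (beta / (2 * (W + 1)))).
  assert (Hd0 : 0 < delta).
  { unfold delta. apply Rmin_pos. lra. apply Rdiv_lt_0_compat. lra. lra. }
  destruct (Hacc (delta / K) ltac:(apply Rdiv_lt_0_compat; lra) (S i)) as [j [Hj Hja]].
  assert (Hja' : K * Rabs (a j - l) < delta).
  { apply Rmult_lt_compat_l with (r := K) in Hja; [|lra].
    replace (K * (delta / K)) with delta in Hja by (field; lra). lra. }
  pose proof (Hdiag j) as Hdj.
  pose proof (Hoff j i ltac:(lia)) as Hoj.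
  pose proof (Hw j) as Hwj.
  pose proof (Cmod_ge_0 (c j)) as Hcj.
  fold beta in Hoj.
  assert (Hc : Cmod (c j) < delta / beta).
  { apply Rmult_lt_reg_r with beta; [lra|]. unfold Rdiv. rewrite Rmult_assoc, Rinv_l by lra. lra. }
  assert (Hdb : delta / beta <= / (2 * (W + 1))).
  { assert (delta <= beta / (2 * (W + 1))) by (unfold delta; apply Rmin_r).
    unfold Rdiv in *. apply Rmult_le_reg_r with beta; [lra|].
    rewrite Rmult_assoc, Rinv_l by lra. lra. }
  assert (Hcw : Cmod (c j) * Cmod (w j) <= / (2 * (W + 1)) * W).
  { apply Rle_trans with (Cmod (c j) * W). apply Rmult_le_compat_l; lra.
    apply Rmult_le_compat_r; lra. }
  assert (HWW : / (2 * (W + 1)) * W < 1/2).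
  { apply Rmult_lt_reg_l with (2 * (W + 1)). lra. rewrite <- Rmult_assoc, Rinv_r by lra. lra. }
  assert (delta <= 1/2) by (unfold delta; apply Rmin_l).
  lra.
Qed.

Lemma res_of X a b k z : ~ spectrum X (Tk a b k) z -> in_resolvent X (Tk a b k) z.
Proof. unfold spectrum. apply NNPP. Qed.

Lemma res_coord X a b k z n : in_resolvent X (Tk a b k) z ->
  exists u, forall m, Cplus (Cmult (Cminus (RtoC (a m)) z) (u m)) (Cmult (k u) (b m)) = single n (RtoC 1) m.
Proof. intros [S [HS Hinv]]. exists (S (single n (RtoC 1))). intro m.
  destruct (Hinv _ (inX_single X n (RtoC 1))) as [_ H2].
  etransitivity; [|rewrite <- H2; reflexivity]. unfold ssub, Tk, sadd, diagA, sscal. ring. Qed.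

Lemma C10 : RtoC 1 <> RtoC 0.
Proof. intro H. apply (f_equal fst) in H. simpl in H. lra. Qed.

Lemma part2 X a b k : (forall n, 0 < a n) ->
  (forall z : C, spectrum X (Tk a b k) z -> Re z <= 0) -> forall n, b n <> RtoC 0.
Proof. intros Ha Hs n Hb.
  assert (Hr : in_resolvent X (Tk a b k) (RtoC (a n))).
  { apply res_of. intro H. apply Hs in H. simpl in H. specialize (Ha n). lra. }
  destruct (res_coord _ _ _ _ _ n Hr) as [u Hu]. specialize (Hu n).
  unfold single in Hu. destruct (Nat.eq_dec n n); [|congruence].
  rewrite Hb in Hu. apply C10. rewrite <- Hu. ring. Qed.

Lemma part1b X a b k : (forall n, 0 < a n) ->
  (forall z : C, spectrum X (Tk a b k) z -> Re z <= 0) -> forall n m, n <> m -> a n <> a m.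
Proof. intros Ha Hs n m Hnm Heq.
  pose proof (part2 X a b k Ha Hs m) as Hbm.
  assert (Hr : in_resolvent X (Tk a b k) (RtoC (a n))).
  { apply res_of. intro H. apply Hs in H. simpl in H. specialize (Ha n). lra. }
  destruct (res_coord _ _ _ _ _ n Hr) as [u Hu].
  pose proof (Hu n) as Hn. pose proof (Hu m) as Hm.
  unfold single in Hn, Hm. destruct (Nat.eq_dec n n); [|congruence]. destruct (Nat.eq_dec m n); [congruence|].
  rewrite Heq in Hm. 
  assert (Hm' : Cmult (k u) (b m) = RtoC 0) by (rewrite <- Hm; ring).
  assert (Hk : k u = RtoC 0).
  { assert (E : k u = Cmult (Cmult (k u) (b m)) (Cinv (b m))) by (field; exact Hbm).
    rewrite E, Hm'. ring. }
  rewrite Hk in Hn. apply C10. rewrite <- Hn. ring. Qed.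

Lemma acc_point (a : nat -> R) : (exists M, forall n, Rabs (a n) <= M) -> (forall n, 0 < a n) ->
  ~ is_lim_seq a 0 ->
  exists l, 0 < l /\ (forall eps, 0 < eps -> forall N, exists n, (N <= n)%nat /\ Rabs (a n - l) < eps).
Proof.
  intros [M HM] Ha Hnl.
  pose proof (proj2_sig (ex_LimSup_seq a)) as HL. fold (LimSup_seq a) in HL.
  destruct (LimSup_seq a) as [l| |]; simpl in HL.
  - assert (Hl : 0 < l).
    { apply Rnot_le_lt. intro Hle. apply Hnl. apply is_lim_seq_spec. intro eps.
      destruct (HL eps) as [_ [N HN]]. exists N. intros n Hn. specialize (HN n Hn). specialize (Ha n).
      rewrite Rminus_0_r, Rabs_pos_eq by lra. lra. }
    exists l. split; [exact Hl|]. intros eps Heps N.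
    destruct (HL (mkposreal eps Heps)) as [H1 [N2 HN2]]. simpl in *.
    destruct (H1 (max N N2)) as [n [Hn Hln]]. exists n. split. lia.
    specialize (HN2 n ltac:(lia)). apply Rabs_def1; lra.
  - destruct (HL M 0%nat) as [n [_ Hn]]. specialize (HM n). pose proof (Rle_abs (a n)). lra.
  - destruct (HL 0) as [N HN]. specialize (HN N (le_n N)). specialize (Ha N). lra.
Qed.

Lemma single_app n z j : single n z j = if Nat.eq_dec j n then z else RtoC 0.
Proof. reflexivity. Qed.

Lemma part1a X a b k : valid_space X -> (exists M, forall n, Rabs (a n) <= M) -> (forall n, 0 < a n) ->
  inX X b -> in_dual X k ->
  (forall z : C, spectrum X (Tk a b k) z -> Re z <= 0) -> is_lim_seq a 0.
Proof.
  intros Hv HM Ha Hb Hk Hs. apply NNPP. intro Hnl.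
  destruct (acc_point a HM Ha Hnl) as [l [Hl Hacc]].
  assert (Hr : in_resolvent X (Tk a b k) (RtoC l)).
  { apply res_of. intro H. apply Hs in H. simpl in H. lra. }
  destruct Hr as [S [[HS1 [HSadd [HSscal [MS HMS]]]] Hinv]].
  set (y := fun n => S (single n (RtoC (a n - l)))).
  set (c := fun n => k (single n (RtoC 1))).
  set (w := S b).
  apply (numeric a l MS (normX X w) (fun n m => y n m) c w); [| | |exact Hacc].
  - intros n m.
    assert (E : ssub (Tk a b k (single n (RtoC 1))) (sscal (RtoC l) (single n (RtoC 1)))
              = sadd (single n (RtoC (a n - l))) (sscal (c n) b)).
    { apply functional_extensionality. intro j. unfold ssub, Tk, sadd, diagA, sscal, c. rewrite !single_app.
      destruct (Nat.eq_dec j n).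
      + subst j. rewrite RtoC_minus. ring.
      + ring. }
    destruct (Hinv _ (inX_single X n (RtoC 1))) as [H1 _].
    rewrite E in H1. rewrite HSadd in H1 by (apply inX_single || (apply inX_scal; exact Hb)).
    rewrite HSscal in H1 by exact Hb.
    rewrite <- H1. unfold sadd, sscal, y, w. reflexivity.
  - intros n m. eapply Rle_trans. apply coord_le_norm. exact Hv. apply HS1, inX_single.
    eapply Rle_trans. apply HMS. apply inX_single. rewrite normX_single by exact Hv.
    rewrite Cmod_R. lra.
  - intro m. apply coord_le_norm. exact Hv. apply HS1, Hb.
Qed.

Theorem theorem1 (X : SeqSpace) (a : nat -> R) (b : nat -> C) :
  valid_space X ->
  (exists M : R, forall n, Rabs (a n) <= M) ->
  (forall n, 0 < a n) ->
  inX X b ->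
  (exists k : cseq -> C, in_dual X k /\
     (forall z : C, spectrum X (Tk a b k) z -> Re z <= 0)) ->
  (is_lim_seq a 0 /\ (forall n m : nat, n <> m -> a n <> a m)) /\
  (forall n : nat, b n <> RtoC 0).
Proof.
  intros Hv HM Ha Hb [k [Hk Hs]].
  split; [split|].
  - exact (part1a X a b k Hv HM Ha Hb Hk Hs).
  - exact (part1b X a b k Ha Hs).
  - exact (part2 X a b k Ha Hs).
Qed.
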